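(* Each $p\in\mathcal P_{\underline b}$ has a unique decomposition $(q_1,\dots,q_b)$.
   Context: $I=[-1,1]$, $\underline b=(\ell_1,\dots,\ell_b)$ a vector of positive even integers. $\mathcal P_{\underline b}$ is the set of polynomials $p:I\to I$ of the form $p=q_b\circ\dots\circ q_1$, where each $q_i:I\to I$ satisfies $q_i(-1)=q_i(1)=-1$, $q_i(0)>0$ for $i\ne b$, and $q_i=A_i^{-1}\circ p_i\circ A_i$ with $p_i(z)=z^{\ell_i}+a_i$ a real polynomial having an invariant interval $J_i$ and $A_i:I\to J_i$ an affine bijection. Such a vector $(q_1,\dots,q_b)$ is called a decomposition of $p$. *)

(* Defs.v *)
From mathcomp Require Import all_boot all_order all_algebra.
From mathcomp Require Import reals.
Set Implicit Arguments. Unset Strict Implicit. Unset Printing Implicit Defensive.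
Import Order.TTheory GRing.Theory Num.Theory.
Local Open Scope ring_scope.

Section Defs.
Variable R : realType.

Definition inI (x : R) : Prop := -1 <= x <= 1.

(* q : I -> I is of the form A^{-1} o p_l o A, where p_l(z) = z^l + a has an
   invariant interval J = [c, d] and A : I -> J, A x = alpha x + beta, is an
   affine bijection.  q is a function R -> R considered only on I. *)
Definition unicrit_factor (l : nat) (q : R -> R) : Prop :=
  exists (a c d alpha beta : R),
    alpha != 0 /\
    (forall y, c <= y <= d <-> exists x, inI x /\ alpha * x + beta = y) /\
    (forall z, c <= z <= d -> c <= z ^+ l + a <= d) /\
    (forall x, inI x -> q x = (((alpha * x + beta) ^+ l + a) - beta) / alpha) /\
    (forall x, inI x -> inI (q x)).

(* compn q n = q_(n-1) o ... o q_0 (factors indexed from 0) *)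
Fixpoint compn (q : nat -> R -> R) (n : nat) (x : R) : R :=
  match n with
  | 0 => x
  | n'.+1 => q n' (compn q n' x)
  end.

(* (q_0, ..., q_(b-1)) is a decomposition of p for the degree vector ell
   (b = size ell; paper's q_(i+1) is q i here). *)
Definition is_decomposition (ell : seq nat) (p : R -> R) (q : nat -> R -> R)
    : Prop :=
  (forall i, (i < size ell)%N ->
     [/\ unicrit_factor (nth 0%N ell i) (q i),
         q i (-1) = -1, q i 1 = -1 &
         ((i.+1 < size ell)%N -> 0 < q i 0)]) /\
  (forall x, inI x -> p x = compn q (size ell) x).

Definition in_P (ell : seq nat) (p : R -> R) : Prop :=
  exists q, is_decomposition ell p q.

End Defs.

(* Main.v *)
Require Import Defs.
From mathcomp Require Import all_boot all_order all_algebra.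
From mathcomp Require Import reals ring lra.
Import Order.TTheory GRing.Theory Num.Theory.
Local Open Scope ring_scope.

Section Aux.
Variable R : realType.

Lemma even_pow (l : nat) (x : R) : ~~ odd l -> x ^+ l = (x ^+ 2) ^+ (l./2).
Proof.
move=> ho; rewrite -exprM mul2n.
by rewrite -{1}(odd_double_half l) (negbTE ho) add0n.
Qed.

Lemma pow_eq2 (l : nat) (x y : R) : (0 < l)%N -> ~~ odd l ->
  x ^+ l = y ^+ l -> x ^+ 2 = y ^+ 2.
Proof.
move=> l0 ho; rewrite !(even_pow _ _ ho) => /eqP.
have h2 : (0 < l./2)%N by case: l l0 ho => [|[|l]].
by rewrite eqrXn2 ?sqr_ge0 // => /eqP.
Qed.

Lemma pow_even_ge0 (l : nat) (x : R) : ~~ odd l -> 0 <= x ^+ l.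
Proof. by move=> ho; rewrite even_pow // exprn_ge0 // sqr_ge0. Qed.

Lemma pow_m1 (l : nat) : ~~ odd l -> (-1 : R) ^+ l = 1.
Proof. by move=> ho; rewrite even_pow // sqrrN !expr1n. Qed.

Lemma I1 : inI (1 : R). Proof. rewrite /inI; apply/andP; split; lra. Qed.
Lemma Im1 : inI (-1 : R). Proof. rewrite /inI; apply/andP; split; lra. Qed.
Lemma I0 : inI (0 : R). Proof. rewrite /inI; apply/andP; split; lra. Qed.

Definition C (q : nat -> R -> R) i := -1 - q i 0.

Lemma factor_form (l : nat) (q : R -> R) : (0 < l)%N -> ~~ odd l ->
  unicrit_factor l q -> q (-1) = -1 -> q 1 = -1 ->
  -1 - q 0 < 0 /\ forall x, inI x -> q x = (-1 - q 0) * x ^+ l - 1 - (-1 - q 0).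
Proof.
move=> l0 ho [a [c0 [d [al [be [anz [_ [_ [hq hI]]]]]]]]] qm1 q1.
have e1 := hq _ I1; have e2 := hq _ Im1.
rewrite q1 in e1; rewrite qm1 in e2.
have hb : be = 0.
  move: (etrans (esym e1) e2) => /(congr1 (fun t => t * al)).
  rewrite /= !divfK // => /addIr /addIr /(pow_eq2 _ _ _ l0 ho) h.
  have : 4 * (al * be) = (al * 1 + be) ^+ 2 - (al * -1 + be) ^+ 2 by ring.
  rewrite h subrr => /eqP; rewrite mulf_eq0 => /orP [|]; first by rewrite pnatr_eq0.
  by rewrite mulf_eq0 (negbTE anz) /= => /eqP.
subst be.
set c := al ^+ l / al.
have hx : forall x, inI x -> q x = c * x ^+ l + a / al.
  move=> x hx; rewrite hq // addr0 subr0 exprMn mulrDl /c mulrAC //.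
have h0 : q 0 = a / al.
  by rewrite (hx _ I0) expr0n eqn0Ngt l0 mulr0 add0r.
have h1 := hx _ I1; rewrite q1 expr1n mulr1 in h1.
have cnz : c != 0 by rewrite /c mulf_neq0 ?invr_neq0 ?expf_neq0.
have := hI _ I0; rewrite /inI.
move=> /andP [ha _].
have {}h0 : forall z : R, z = 0 -> q z = a / al by move=> z ->.
rewrite (h0 _ erefl) in ha.
move: (a / al) ha h1 hx h0 => t ha h1 hx h0; clearbody c.
have hc0 : c <= 0 by lra.
have hc : c < 0 by rewrite lt_neqAle cnz hc0.
have et : t = -1 - c by lra.
have eq0 : q 0 = t by apply: h0.
suff H : (-1 - q 0 < 0) /\ forall x, inI x -> q x = (-1 - q 0) * x ^+ l - 1 - (-1 - q 0).
  exact H.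
rewrite eq0 (_ : -1 - t = c); last by rewrite et; ring.
split => // x hxI; rewrite hx // et; ring.
Qed.


Definition Good (ell : seq nat) (q : nat -> R -> R) : Prop :=
 (forall i, (i < size ell)%N -> C q i < 0) /\
 (forall i, (i < size ell)%N -> forall x, inI x ->
     q i x = C q i * x ^+ nth 0%N ell i - 1 - C q i) /\
 (forall i, (i < size ell)%N -> forall x, inI x -> inI (q i x)) /\
 (forall i, (i < size ell)%N -> q i 1 = -1 /\ q i (-1) = -1) /\
 (forall i, (i.+1 < size ell)%N -> C q i < -1).

Lemma good_of_dec ell p q :
  (forall i, (i < size ell)%N -> (0 < nth 0%N ell i)%N /\ ~~ odd (nth 0%N ell i)) ->
  is_decomposition ell p q -> Good ell q.
Proof.
move=> hell [hd _]; split; [|split; [|split; [|split]]] => i hi.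
- have [l0 ho] := hell i hi; have [hu hm h1 _] := hd i hi.
  by have [] := factor_form _ _ l0 ho hu hm h1.
- have [l0 ho] := hell i hi; have [hu hm h1 _] := hd i hi.
  by have [] := factor_form _ _ l0 ho hu hm h1.
- by have [[a [c0 [d [al [be [_ [_ [_ [_ hI]]]]]]]]] _ _ _] := hd i hi.
- by have [_ hm h1 _] := hd i hi.
- have hi' : (i < size ell)%N by apply: ltnW.
  have [_ _ _ hp] := hd i hi'.
  have := hp hi; rewrite /C => h.
  suff H : -1 - q i 0 < -1 by exact H.
  lra.
Qed.

Lemma range_lem ell q n :
  (forall i, (i < n)%N -> (0 < nth 0%N ell i)%N /\ ~~ odd (nth 0%N ell i)) ->
  (forall i, (i < n)%N -> C q i < -1) ->
  (forall i, (i < n)%N -> forall x, inI x ->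
     q i x = C q i * x ^+ nth 0%N ell i - 1 - C q i) ->
  forall y, -1 <= y <= 0 -> exists2 x, inI x & compn q n x = y.
Proof.
elim: n => [|n IH] hl hc hf y /andP [y1 y0].
  exists y => //; rewrite /inI; apply/andP; split; lra.
have [l0 ho] := hl n (ltnSn n).
have cn := hc n (ltnSn n).
have [z /andP [z1 z0] rz] : exists2 z, -1 <= z <= 0 &
    root (C q n *: 'X^(nth 0%N ell n) + (-1 - C q n - y)%:P) z.
  apply: poly_ivt; first lra.
  rewrite !hornerE pow_m1 // expr0n eqn0Ngt l0 /= mulr0 add0r mulr1.
  apply/andP; split; lra.
have zI : inI z by rewrite /inI; apply/andP; split; lra.
have [x hx hxz] := IH (fun i hi => hl i (leqW hi)) (fun i hi => hc i (leqW hi))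
   (fun i hi => hf i (leqW hi)) z (introT andP (conj z1 z0)).
exists x => //=; rewrite hxz (hf n (ltnSn n) z zI).
move: rz; rewrite /root !hornerE => /eqP e.
suff H : C q n * z ^+ nth 0%N ell n - 1 - C q n = y by exact H.
have {}e : C q n * z ^+ nth 0%N ell n - 1 - C q n - y = 0 := e.
lra.
Qed.

Lemma compn_inI (q : nat -> R -> R) n (x : R) : (forall i, (i < n)%N -> forall y, inI y -> inI (q i y)) ->
  inI x -> inI (compn q n x).
Proof.
elim: n => [|n IH] hI hx //=.
by apply: (hI) => //; apply: IH => // i hi; apply: (hI); apply: leqW.
Qed.

Fixpoint PP (ell : seq nat) (q : nat -> R -> R) (n : nat) : {poly R} :=
  match n with
  | 0 => 'X
  | n'.+1 => (C q n' *: 'X^(nth 0%N ell n') + (-1 - C q n')%:P) \Po PP ell q n'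
  end.

Lemma compn_PP ell q n :
  (forall i, (i < n)%N -> forall x, inI x ->
     q i x = C q i * x ^+ nth 0%N ell i - 1 - C q i) ->
  (forall i, (i < n)%N -> forall y, inI y -> inI (q i y)) ->
  forall x, inI x -> compn q n x = (PP ell q n).[x].
Proof.
elim: n => [|n IH] hf hI x hx /=; first by rewrite hornerX.
have hI' : forall i, (i < n)%N -> forall y, inI y -> inI (q i y).
  by move=> i hi; apply: (hI); apply: leqW.
rewrite horner_comp -IH //; last by move=> i hi; apply: hf; apply: leqW.
rewrite hf //; last exact: compn_inI.
by rewrite hornerD hornerZ hornerXn hornerC addrA.
Qed.

Lemma compn_one (q : nat -> R -> R) n : (forall i, (i < n)%N -> q i 1 = -1 /\ q i (-1) = -1) ->
  compn q n 1 = if n is 0 then 1 else -1.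
Proof.
elim: n => [|n IH] h //=.
have [h1 hm] := h n (ltnSn n).
rewrite IH; last by move=> i hi; apply: h; apply: leqW.
by case: n IH h h1 hm => [|n] /= IH h h1 hm.
Qed.

Lemma poly_I0 (p : {poly R}) : (forall x, inI x -> p.[x] = 0) -> p = 0.
Proof.
move=> h; apply/eqP; apply/negPn/negP => pn0.
set rs := [seq (k.+1%:R : R)^-1 | k <- iota 0 (size p)].
have hall : all (root p) rs.
  apply/allP => y /mapP [k _ ->]; apply/rootP; apply: h.
  have k0 : (0 : R) < k.+1%:R by rewrite ltr0n.
  rewrite /inI; apply/andP; split.
    apply: (@le_trans _ _ 0); first by rewrite lerN10.
    by rewrite invr_ge0 ltW.
  by rewrite invf_le1 // ler1n.
have hu : uniq rs.
  rewrite map_inj_uniq ?iota_uniq // => a b /invr_inj /eqP.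
  by rewrite eqr_nat eqSS => /eqP.
have := max_poly_roots pn0 hall hu.
by rewrite size_map size_iota ltnn.
Qed.


Lemma main_ind ell (q q' : nat -> R -> R) :
  (forall i, (i < size ell)%N -> (0 < nth 0%N ell i)%N /\ ~~ odd (nth 0%N ell i)) ->
  Good ell q -> Good ell q' ->
  forall n, (n <= size ell)%N ->
  (forall x, inI x -> compn q n x = compn q' n x) ->
  forall i, (i < n)%N -> C q i = C q' i.
Proof.
move=> hell [gc [gf [gI [g1 gp]]]] [gc' [gf' [gI' [g1' gp']]]].
elim=> [|n IH] hn heq i hi //.
have hn' : (n < size ell)%N := hn.
have [l0 ho] := hell n hn'.
have lt1 : forall j, (j < n)%N -> (j < size ell)%N.
  by move=> j hj; apply: ltn_trans hj hn'.
have lt2 : forall j, (j < n)%N -> (j.+1 < size ell)%N.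
  by move=> j hj; apply: leq_ltn_trans hj hn'.
have hIn : forall j, (j < n)%N -> forall y, inI y -> inI (q j y).
  by move=> j hj; apply: gI; apply: lt1.
have hIn' : forall j, (j < n)%N -> forall y, inI y -> inI (q' j y).
  by move=> j hj; apply: gI'; apply: lt1.
have hfn : forall j, (j < n)%N -> forall x, inI x ->
     q j x = C q j * x ^+ nth 0%N ell j - 1 - C q j.
  by move=> j hj; apply: gf; apply: lt1.
have hfn' : forall j, (j < n)%N -> forall x, inI x ->
     q' j x = C q' j * x ^+ nth 0%N ell j - 1 - C q' j.
  by move=> j hj; apply: gf'; apply: lt1.
have key : forall x, inI x ->
   C q n * (compn q n x) ^+ nth 0%N ell n - 1 - C q n =
   C q' n * (compn q' n x) ^+ nth 0%N ell n - 1 - C q' n.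
  move=> x hx; rewrite -gf // -?gf' //; last exact: compn_inI.
    exact: heq x hx.
  exact: compn_inI.
have y0 : -1 <= (0:R) <= 0.
  by apply/andP; split; lra.
have [x0 hx0 G0] := @range_lem ell q n (fun j hj => hell j (lt1 j hj))
   (fun j hj => gp j (lt2 j hj)) hfn 0 y0.
have [x1 hx1 G1] := @range_lem ell q' n (fun j hj => hell j (lt1 j hj))
   (fun j hj => gp' j (lt2 j hj)) hfn' 0 y0.
have ecc : C q n = C q' n.
  have e0 := key x0 hx0; rewrite G0 expr0n eqn0Ngt l0 /= mulr0 in e0.
  have e1 := key x1 hx1; rewrite G1 expr0n eqn0Ngt l0 /= mulr0 in e1.
  have p1 := pow_even_ge0 _ (compn q' n x0) ho.
  have p2 := pow_even_ge0 _ (compn q n x1) ho.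
  have m1 := mulr_le0_ge0 (ltW (gc' n hn')) p1.
  have m2 := mulr_le0_ge0 (ltW (gc n hn')) p2.
  lra.
have hsq : forall x, inI x -> (compn q n x) ^+ 2 = (compn q' n x) ^+ 2.
  move=> x hx; apply: (pow_eq2 _ _ _ l0 ho); have := key x hx; rewrite -ecc => e.
  have cn0 : C q n != 0 by rewrite lt_eqF ?gc.
  apply: (mulfI cn0); lra.
have hpoly : PP ell q n = PP ell q' n.
  have hz : (PP ell q n - PP ell q' n) * (PP ell q n + PP ell q' n) = 0.
    apply: poly_I0 => x hx; rewrite hornerM hornerD hornerN hornerD.
    rewrite -!(@compn_PP ell q n hfn hIn) // -!(@compn_PP ell q' n hfn' hIn') //.
    have e := hsq x hx.
    transitivity ((compn q n x) ^+ 2 - (compn q' n x) ^+ 2); first ring.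
    by rewrite e subrr.
  move/eqP: hz; rewrite mulf_eq0 => /orP [/eqP/subr0_eq //|/eqP hz].
  exfalso.
  have := congr1 (fun P => P.[1]) hz; rewrite /= hornerD horner0.
  rewrite -(@compn_PP ell q n hfn hIn 1 I1) -(@compn_PP ell q' n hfn' hIn' 1 I1).
  rewrite (@compn_one q n (fun j hj => g1 j (lt1 j hj))).
  rewrite (@compn_one q' n (fun j hj => g1' j (lt1 j hj))).
  by case: (n) => [|m] e; lra.
have heqn : forall x, inI x -> compn q n x = compn q' n x.
  move=> x hx; rewrite (@compn_PP ell q n hfn hIn) // (@compn_PP ell q' n hfn' hIn') //.
  by rewrite hpoly.
move: hi; rewrite ltnS leq_eqVlt => /orP [/eqP -> //|hi].
exact: IH (ltnW hn) heqn i hi.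
Qed.

End Aux.

Theorem lemma4p3 (R : realType) (ell : seq nat)
  (hell : forall i, (i < size ell)%N -> (0 < nth 0%N ell i)%N /\ ~~ odd (nth 0%N ell i))
  (p : R -> R) (q q' : nat -> R -> R) :
  is_decomposition ell p q -> is_decomposition ell p q' ->
  forall i, (i < size ell)%N -> forall x : R, inI x -> q i x = q' i x.
Proof.
move=> hd hd' i hi x hx.
have g := @good_of_dec R ell p q hell hd; have g' := @good_of_dec R ell p q' hell hd'.
have heq : forall y, inI y -> compn q (size ell) y = compn q' (size ell) y.
  by move=> y hy; rewrite -(proj2 hd y hy) (proj2 hd' y hy).
have e := @main_ind R ell q q' hell g g' (size ell) (leqnn (size ell)) heq i hi.
case: g => _ [gf _]; case: g' => _ [gf' _].
by rewrite (gf i hi x hx) (gf' i hi x hx) e.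
Qed.
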